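(* Let $A\in\{\mathbb Z,\mathbb R\}$ and let $X\subset\mathbb R^d$ be bounded. Then $\mathrm{Flt}_d^A(X)=\sup\{\mathrm{width}(K): K\subset\mathbb R^d \text{ is an } A\text{-}X\text{-free convex body}\}$.
   Context: A convex body in $\mathbb R^d$ is a nonempty compact convex subset of $\mathbb R^d$. An $A$-unimodular transformation is a map $T:\mathbb R^d\to\mathbb R^d$, $T(x)=Mx+b$ with $M\in \mathrm{GL}_d(\mathbb Z)$ and $b\in A^d$; an $A$-unimodular copy of $X\subset\mathbb R^d$ is a set $T(X)$ for such a $T$. For $u\in(\mathbb Z^d)^*$ (extended linearly to $\mathbb R^d$), $\mathrm{width}_u(K)=\sup_{x,y\in K}|u(x)-u(y)|$ and $\mathrm{width}(K)=\inf_{u\in(\mathbb Z^d)^*\setminus\{0\}}\mathrm{width}_u(K)$. $\mathrm{Flt}_d^A(X)=\sup\{\mathrm{width}(K): K\subset\mathbb R^d \text{ a convex body containing no } A\text{-unimodular copy of } X\}$. A convex set $K$ is $A$-$X$-free if its relative interior contains no $A$-unimodular copy of $X$ (the relative interior of a single point is that point). *)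

(* Defs.v *)
From HB Require Import structures.
From mathcomp Require Import all_boot all_order all_algebra.
From mathcomp Require Import all_classical all_reals all_analysis.
Set Implicit Arguments. Unset Strict Implicit. Unset Printing Implicit Defensive.
Import Order.TTheory GRing.Theory Num.Theory.
Import numFieldNormedType.Exports.
Local Open Scope classical_set_scope.
Local Open Scope ring_scope.

Inductive coeffA := AZ | AR.

Definition inA {R : realType} (A : coeffA) (x : R) : Prop :=
  match A with AZ => exists z : int, x = z%:~R | AR => True end.

Section Defs.
Variables (R : realType) (d : nat).
Notation pt := 'rV[R]_d.

Definition GLZ (M : 'M[int]_d) : Prop := M \in unitmx.

(* A-unimodular transformation x |-> x M + b (row-vector convention;
   GL_d(Z) is closed under transposition). *)
Definition unimod_map (A : coeffA) (T : pt -> pt) : Prop :=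
  exists (M : 'M[int]_d) (b : pt),
    GLZ M /\ (forall i, inA A (b 0 i)) /\
    forall x, T x = x *m map_mx (fun z : int => z%:~R) M + b.

Definition contains_copy (A : coeffA) (X K : set pt) : Prop :=
  exists T, unimod_map A T /\ T @` X `<=` K.

Definition convex_set (K : set pt) : Prop :=
  forall x y (t : R), K x -> K y -> 0 <= t <= 1 -> K ((1 - t) *: x + t *: y).

Definition convex_body (K : set pt) : Prop :=
  K !=set0 /\ compact K /\ convex_set K.

Definition aff_hull (K : set pt) : set pt :=
  [set y | exists (n : nat) (p : 'I_n -> pt) (c : 'I_n -> R),
     (forall i, K (p i)) /\ \sum_(i < n) c i = 1 /\ y = \sum_(i < n) c i *: p i].

Definition rel_interior (K : set pt) : set pt :=
  [set x | K x /\ exists e : R, 0 < e /\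
     forall y, aff_hull K y -> ball x e y -> K y].

Definition AX_free (A : coeffA) (X K : set pt) : Prop :=
  convex_set K /\ ~ contains_copy A X (rel_interior K).

Definition lin_int (u : 'rV[int]_d) (x : pt) : R :=
  \sum_(i < d) (u 0 i)%:~R * x 0 i.

Definition width_u (u : 'rV[int]_d) (K : set pt) : \bar R :=
  ereal_sup [set (`|lin_int u x - lin_int u y|)%:E | x in K & y in K].

Definition width (K : set pt) : \bar R :=
  ereal_inf [set width_u u K | u in [set u : 'rV[int]_d | u != 0]].

Definition Flt (A : coeffA) (X : set pt) : \bar R :=
  ereal_sup [set width K | K in [set K | convex_body K /\ ~ contains_copy A X K]].

End Defs.

(* Main.v *)
Set Warnings "-all".
Require Import Defs.
From HB Require Import structures.
From mathcomp Require Import all_boot all_order all_algebra.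
From mathcomp Require Import all_classical all_reals all_analysis.
From mathcomp Require Import ring lra zify.
From Stdlib Require Import Lia.
Import Order.TTheory GRing.Theory Num.Theory.
Import numFieldNormedType.Exports.
Local Open Scope classical_set_scope.
Local Open Scope ring_scope.
Section Aux.
Variables (R : realType) (d : nat).
Notation pt := 'rV[R]_d.

Lemma convex_comb (K : set pt) x0 n (a : 'I_n -> R) (v : 'I_n -> pt) :
  Defs.convex_set K -> K x0 -> (forall i, 0 <= a i) -> (forall i, K (x0 + v i)) ->
  \sum_i a i <= 1 -> K (x0 + \sum_i a i *: v i).
Proof.
move=> cK Kx0; elim: n a v => [|n IH] a v a0 Kv s1.
  by rewrite big_ord0 addr0.
rewrite big_ord_recr /=; rewrite big_ord_recr /= in s1.
set t := a ord_max in s1 *.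
set a' := fun i : 'I_n => a (widen_ord (leqnSn n) i).
set v' := fun i : 'I_n => v (widen_ord (leqnSn n) i).
have a'0 : forall i, 0 <= a' i by move=> i; exact: a0.
have s0 : 0 <= \sum_(i < n) a' i by apply: sumr_ge0 => i _.
have t0 : 0 <= t by exact: a0.
have [t1|t1] := ltrP t 1.
  have Kw : K (x0 + \sum_i (a' i / (1 - t)) *: v' i).
    apply: IH.
    - by move=> i; apply: divr_ge0 => //; rewrite subr_ge0 ltW.
    - by move=> i; exact: Kv.
    - rewrite -mulr_suml ler_pdivrMr ?subr_gt0 // mul1r.
      by rewrite lerBrDr.
  have tI : 0 <= t <= 1 by rewrite t0 ltW.
  have := cK _ _ t Kw (Kv ord_max) tI.
  have -> : (1 - t) *: (x0 + \sum_i (a' i / (1 - t)) *: v' i) + t *: (x0 + v ord_max)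
      = x0 + (\sum_(i < n) a' i *: v' i + t *: v ord_max).
    rewrite !scalerDr scaler_sumr.
    have -> : \sum_(i < n) (1 - t) *: ((a' i / (1 - t)) *: v' i) = \sum_(i < n) a' i *: v' i.
      apply: eq_bigr => i _; rewrite scalerA mulrCA mulfV ?mulr1 //.
      by rewrite subr_eq0 eq_sym lt_eqF.
    rewrite addrACA -scalerDl subrK scale1r //.
  by [].
have s0' : 0 <= \sum_(i < n) a (widen_ord (leqnSn n) i) by exact: s0.
have teq : t = 1 by lra.
have sz : \sum_(i < n) a' i = 0 by rewrite /a'; lra.
have -> : \sum_(i < n) a' i *: v' i = 0.
  by apply: big1 => i _; rewrite (psumr_eq0P _ sz) ?scale0r // => j _; exact: a'0.
by rewrite add0r teq scale1r; exact: Kv.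
Qed.

Lemma subB_sub m1 m2 (A B : 'M[R]_(m1, d)) (V : 'M[R]_(m2, d)) :
  (A <= V)%MS -> (B <= V)%MS -> (A - B <= V)%MS.
Proof. by move=> hA hB; rewrite addmx_sub // -scaleN1r scalemx_sub. Qed.

Lemma max_family (K : set pt) x0 m : forall n (V : 'M[R]_(n, d)),
  (forall i, K (x0 + row i V)) -> (d - \rank V <= m)%N ->
  exists n' (V' : 'M[R]_(n', d)), (forall i, K (x0 + row i V')) /\
    forall x, K x -> (x - x0 <= V')%MS.
Proof.
elim: m => [|m IH] n V KV hm;
  (have [h|] := pselect (forall x, K x -> (x - x0 <= V)%MS); first by exists n, V);
  move/existsNP => [x /not_implyP [Kx nsub]];
  set V' := col_mx V (x - x0);
  (have KV' : forall i, K (x0 + row i V') by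
    move=> i; rewrite -(splitK i); case: (fintype.split i) => j /=;
      [rewrite rowKu; exact: KV | rewrite rowKd row_id addrC subrK]);
  have lt : (\rank V < \rank V')%N by
    (apply: rank_ltmx; rewrite ltmxE /V' -addsmxE addsmxSl /=;
     apply/negP => hs; apply: nsub; apply: (submx_trans _ hs); rewrite -?addsmxE; exact: addsmxSr).
- exfalso; move: hm lt (rank_leq_col V'); lia.
- apply: (IH _ V' KV'); move: hm lt (rank_leq_col V'); lia.
Qed.

Lemma entry_le (u : pt) j : `|u 0 j| <= `|u|.
Proof.
have -> : `|u| = mx_norm u by [].
rewrite mx_normrE; exact: (le_bigmax _ (fun ij : 'I_1 * 'I_d => `|u ij.1 ij.2|) (0, j)).
Qed.

Lemma aux_ineq (x : R) (n : nat) : n.+1%:R * x = 1 -> n%:R * (x + x * x) <= 1.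
Proof. move=> h. rewrite mulrSr in h. have h1 : n%:R * x = 1 - x by lra.
have -> : n%:R * (x + x*x) = n%:R * x + (n%:R * x) * x by ring.
rewrite h1. nra. Qed.

Lemma center (K : set pt) x0 n (V : 'M[R]_(n, d)) :
  Defs.convex_set K -> K x0 -> (forall i, K (x0 + row i V)) ->
  exists c e, 0 < e /\ (c - x0 <= V)%MS /\
    forall y, (y - x0 <= V)%MS -> `|c - y| < e -> K y.
Proof.
move=> cK Kx0 KV.
set k : R := n.+1%:R.
have k0 : 0 < k by rewrite ltr0n.
set x := k^-1.
have xp : 0 < x by rewrite invr_gt0.
have kx : k * x = 1 by rewrite mulfV // gt_eqF.
have x1 : x <= 1 by rewrite invf_le1 // ler1n.
set e1 : 'rV[R]_n := const_mx x.
set c := x0 + e1 *m V.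
set P := pinvmx V.
set C := 1 + \sum_i \sum_j `|P i j|.
have C1 : 1 <= C by rewrite lerDl; apply: sumr_ge0 => i _; apply: sumr_ge0.
have C0 : 0 < C by apply: lt_le_trans C1.
have hPj : forall j, \sum_i `|P i j| <= C.
  move=> j; apply: (@le_trans _ _ (\sum_i \sum_j `|P i j|)); last by rewrite /C; lra.
  apply: ler_sum => i _.
  by rewrite (bigD1 j) //= lerDl; apply: sumr_ge0.
set delta := x * x.
have hc : (c - x0 <= V)%MS by rewrite /c addrAC subrr add0r submxMl.
exists c, (delta / C); split; first by apply: divr_gt0 => //; rewrite mulr_gt0.
split => // y hy hcy.
set a := (y - c) *m P + e1.
have ycV : (y - c <= V)%MS.
  have -> : y - c = (y - x0) - (c - x0) by rewrite opprB addrA subrK.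
  exact: subB_sub.
have aV : y = x0 + a *m V.
  rewrite /a mulmxDl mulmxKpV // /c.
  by apply/rowP => j; rewrite !mxE; ring.
have ha : forall j, `|a 0 j - x| <= delta.
  move=> j; rewrite /a mxE /e1 mxE mxE addrK.
  apply: (le_trans (ler_norm_sum _ _ _)).
  apply: (@le_trans _ _ (\sum_i `|y - c| * `|P i j|)).
    apply: ler_sum => i _; rewrite normrM ler_wpM2r //; exact: entry_le.
  rewrite -mulr_sumr.
  apply: (le_trans (ler_wpM2l (normr_ge0 _) (hPj j))).
  rewrite distrC; apply: ltW; by rewrite -ltr_pdivlMr.
have a0 : forall j, 0 <= a 0 j.
  move=> j; have := ha j; rewrite ler_distl => /andP [h _].
  apply: le_trans h; rewrite /delta; nra.
have asum : \sum_j a 0 j <= 1.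
  apply: (@le_trans _ _ (\sum_(j < n) (x + delta))).
    apply: ler_sum => j _; have := ha j; rewrite ler_distl => /andP [_ h].
    by [].
  rewrite sumr_const card_ord -mulr_natl; exact: aux_ineq.
rewrite aV mulmx_sum_row; exact: convex_comb.
Qed.

Lemma aff_sub (K : set pt) x0 m (V : 'M[R]_(m, d)) :
  (forall x, K x -> (x - x0 <= V)%MS) -> forall y, aff_hull K y -> (y - x0 <= V)%MS.
Proof.
move=> hK y [n [p [c [Kp [s1 ->]]]]].
have -> : \sum_i c i *: p i - x0 = \sum_i c i *: (p i - x0).
  rewrite -{1}[x0]scale1r -s1 scaler_suml -sumrB; apply: eq_bigr => i _.
  by rewrite scalerBr.
by apply: summx_sub => i _; apply: scalemx_sub; exact: hK.
Qed.

Lemma shrink_relint (K : set pt) x0 m (V : 'M[R]_(m, d)) c e t :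
  Defs.convex_set K -> (forall x, K x -> (x - x0 <= V)%MS) -> 0 < e ->
  (c - x0 <= V)%MS -> (forall y, (y - x0 <= V)%MS -> `|c - y| < e -> K y) ->
  0 < t < 1 -> forall x, K x -> rel_interior K (t *: x + (1 - t) *: c).
Proof.
move=> cK hK e0 hcV hc /andP [t0 t1] x Kx.
have Kc : K c by apply: hc => //; rewrite subrr normr0.
have tI : 0 <= t <= 1 by rewrite (ltW t0) (ltW t1).
have t1' : 0 < 1 - t by rewrite subr_gt0.
split; first by have := cK c x t Kc Kx tI; rewrite addrC.
exists ((1 - t) * e); split; first by rewrite mulr_gt0.
move=> y hy hb.
have hy' := @aff_sub _ _ _ _ hK _ hy.
set z := t *: x + (1 - t) *: c.
set w := c + (1 - t)^-1 *: (y - z).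
have hwV : (w - x0 <= V)%MS.
  have -> : w - x0 = (c - x0) + (1 - t)^-1 *: ((y - x0) - (t *: (x - x0) + (1 - t) *: (c - x0))).
    by apply/rowP => j; rewrite /w /z !mxE; ring.
  apply: addmx_sub => //; apply: scalemx_sub; apply: subB_sub => //.
  by apply: addmx_sub; apply: scalemx_sub => //; exact: hK.
have Kw : K w.
  apply: hc => //.
  have -> : c - w = - ((1 - t)^-1 *: (y - z)) by rewrite /w opprD addrA subrr add0r.
  rewrite normrN normrZ ger0_norm; last by rewrite invr_ge0 ltW.
  rewrite mulrC ltr_pdivrMr //.
  move: hb; rewrite -ball_normE /ball_ /= distrC; by rewrite mulrC.
have -> : y = (1 - t) *: w + t *: x.
  apply/rowP => j; rewrite /w /z !mxE; field.
  by rewrite gt_eqF.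
exact: cK.
Qed.

Lemma lin_intD (u : 'rV[int]_d) a b (x y : pt) :
  lin_int u (a *: x + b *: y) = a * lin_int u x + b * lin_int u y.
Proof.
rewrite /lin_int !mulr_sumr -big_split; apply: eq_bigr => i _; by rewrite !mxE mulrDr; congr (_ + _); rewrite mulrCA.
Qed.

End Aux.

Theorem lemma2p2 (R : realType) (d : nat) (A : coeffA) (X : set 'rV[R]_d) :
  bounded_set X ->
  Flt A X =
  ereal_sup [set width K | K in [set K : set 'rV[R]_d | convex_body K /\ AX_free A X K]].
Proof.
move=> _; apply/eqP; rewrite eq_le; apply/andP; split.
  apply: le_ereal_sup => _ [K [cb nc] <-]; exists K => //; split => //.
  split; first by case: cb => _ [].
  move=> [T [uT sub]]; apply: nc; exists T; split => //.
  by apply: subset_trans sub _ => x [].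
apply: ge_ereal_sup => _ [K [[[x0 Kx0] [cpK cK]] [_ nc]] <-].
have [n' [V [KV hK]]] := @max_family R d K x0 d 0 0 (fun i => match i with Ordinal _ h => False_ind _ (notF h) end) (leq_subr _ _).
have [c [e [e0 [hcV hc]]]] := @center R d K x0 n' V cK Kx0 KV.
have w0 : (0 <= width K)%E.
  apply: le_ereal_inf_tmp => _ [u _ <-]; apply: ereal_sup_ubound.
  by exists x0 => //; exists x0 => //; rewrite subrr normr0.
apply/lee_mul01Pr => // t /andP [t0 t1].
set g := fun x : 'rV[R]_d => t *: x + (1 - t) *: c.
set Kt := [set g x | x in K].
have sub : Kt `<=` rel_interior K.
  move=> _ [x Kx <-]; apply: (@shrink_relint R d K x0 n' V c e t cK hK e0 hcV hc) => //.
  by rewrite t0 t1.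
have cbt : convex_body Kt.
  split; first by exists (g x0); exists x0.
  split.
    apply: continuous_compact => //; apply: continuous_subspaceT => x.
    by apply: continuousD; [apply: continuousZl_tmp | apply: cst_continuous].
  move=> _ _ s [x1 K1 <-] [x2 K2 <-] sI; exists ((1 - s) *: x1 + s *: x2).
    exact: cK.
  by apply/rowP => j; rewrite /g !mxE; ring.
apply: (@le_trans _ _ (width Kt)); last first.
  apply: ereal_sup_ubound; exists Kt => //; split => //.
  move=> [T [uT sT]]; apply: nc; exists T; split => //; exact: subset_trans sT sub.
apply: le_ereal_inf_tmp => _ [u u0 <-].
apply: (@le_trans _ _ (t%:E * width_u u K)%E).
  apply: lee_wpmul2l; first by rewrite lee_fin ltW.
  by apply: ereal_inf_lbound; exists u.
rewrite /width_u -ereal_sup_pZl //.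
apply: le_ereal_sup => _ [_ [x Kx [y Ky <-]] <-].
exists (g x); first by exists x.
exists (g y); first by exists y.
rewrite /g !lin_intD.
have -> : t * lin_int u x + (1 - t) * lin_int u c - (t * lin_int u y + (1 - t) * lin_int u c)
  = t * (lin_int u x - lin_int u y) by ring.
by rewrite normrM ger0_norm ?ltW // EFinM.
Qed.
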